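(* For any integer $t\ge 2$ and any non-singleton lattices $L_1,\dots,L_t$ of finite breadth, $$\operatorname{br}(L_1\times\dots\times L_t)=\operatorname{br}(L_1)+\dots+\operatorname{br}(L_t).$$
   Context: The breadth $\operatorname{br}(L)$ of a lattice $L$ is the least positive integer $n$ such that every join $\bigvee_{i=1}^m x_i$ with $x_i\in L$ and $m\ge n$ equals the join of some $n$ of the joinands $x_i$. *)

(* Defs.v *)
From HB Require Import structures.
From mathcomp Require Import all_boot all_order.
Set Implicit Arguments. Unset Strict Implicit. Unset Printing Implicit Defensive.
Import Order.TTheory.
Local Open Scope order_scope.

(* Join of a finite nonempty list of elements w.r.t. a binary join [jn];
   [None] for the empty list (the join of zero elements is not considered). *)
Definition ojoin {T : Type} (jn : T -> T -> T) (s : seq T) : option T :=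
  match s with [::] => None | y :: s' => Some (foldl jn y s') end.

Definition famjoin {T : Type} (jn : T -> T -> T) (m : nat) (x : 'I_m -> T) : option T :=
  ojoin jn (map x (enum 'I_m)).

Definition breadth_le {T : Type} (jn : T -> T -> T) (n : nat) : Prop :=
  forall (m : nat) (x : 'I_m -> T), (n <= m)%N ->
    exists f : 'I_n -> 'I_m, injective f /\ famjoin jn (x \o f) = famjoin jn x.

Definition is_breadth {T : Type} (jn : T -> T -> T) (n : nat) : Prop :=
  (0 < n)%N /\ breadth_le jn n /\
  forall k : nat, (0 < k)%N -> breadth_le jn k -> (n <= k)%N.

Definition prod_join {t : nat} {d : 'I_t -> Order.disp_t}
  (L : forall i, latticeType (d i)) (x y : forall i, L i) : forall i, L i :=
  fun i => Order.join (x i) (y i).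

(* Main.v *)
Require Import Defs.
From HB Require Import structures.
From mathcomp Require Import all_boot all_order.
From Stdlib Require Import Classical ClassicalEpsilon FunctionalExtensionality.
Set Implicit Arguments. Unset Strict Implicit. Unset Printing Implicit Defensive.
Import Order.TTheory.
Local Open Scope order_scope.

Lemma famjoin_some (T : Type) (jn : T -> T -> T) m (x : 'I_m -> T) :
  (0 < m)%N -> exists v, famjoin jn x = Some v.
Proof.
rewrite /famjoin; case: m x => // m x _.
have: ord0 \in enum 'I_m.+1 by rewrite mem_enum.
by case: (enum 'I_m.+1) => // y s _ /=; eexists.
Qed.

Lemma foldl_join_le d (T : latticeType d) (y : T) s u :
  (foldl Order.join y s <= u) = (y <= u) && all (fun z => z <= u) s.
Proof.
elim: s y => [|z s IH] y /=; first by rewrite andbT.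
by rewrite IH leUx andbA.
Qed.

Lemma famjoin_le d (T : latticeType d) m (x : 'I_m -> T) v :
  famjoin Order.join x = Some v -> forall u, v <= u <-> forall k, x k <= u.
Proof.
rewrite /famjoin => E u.
have H : (v <= u) = all (fun z => z <= u) (map x (enum 'I_m)).
  by move: E; case: (map x (enum 'I_m)) => //= y s [<-]; rewrite foldl_join_le.
rewrite H; split.
  by move/allP => Hk k; apply: Hk; apply: map_f; rewrite mem_enum.
by move=> Hk; apply/allP => z /mapP [k _ ->].
Qed.

Lemma famjoin_ub d (T : latticeType d) m (x : 'I_m -> T) v :
  famjoin Order.join x = Some v -> forall k, x k <= v.
Proof. by move=> E; apply/(famjoin_le E). Qed.

Lemma famjoin_prod t (d : 'I_t -> Order.disp_t) (L : forall i, latticeType (d i))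
  m (x : 'I_m -> forall i, L i) v :
  famjoin (@prod_join t d L) x = Some v ->
  forall i, famjoin Order.join (fun k => x k i) = Some (v i).
Proof.
rewrite /famjoin => E i.
rewrite (_ : map _ _ = map (fun z => z i) (map x (enum 'I_m))); last by rewrite -map_comp.
move: E; case: (map x (enum 'I_m)) => //= y s [<-]; congr Some.
by elim: s y => //= z s IH y; rewrite -IH.
Qed.

Lemma superset_card (T : finType) (U : {set T}) n :
  (#|U| <= n <= #|T|)%N -> exists V : {set T}, U \subset V /\ #|V| = n.
Proof.
elim: n => [|n IH].
  by rewrite leqn0 => /andP [/eqP /cards0_eq -> _]; exists set0; rewrite cards0 sub0set.
move=> /andP [hU hn].
case: (ltnP n #|U|) => hUn.
  by exists U; split => //; apply/eqP; rewrite eqn_leq hU.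
have [V [sUV cV]] := IH (introT andP (conj hUn (ltnW hn))).
have : (#|V| < #|T|)%N by rewrite cV.
move=> hlt.
case: (pickP (fun x => x \notin V)) => [x hx|h0]; last first.
  have : V = setT by apply/setP => x; rewrite inE; move: (h0 x); case: (x \in V).
  by move=> eV; move: hlt; rewrite eV cardsT ltnn.
exists (x |: V); split; first by apply: subset_trans sUV (subsetU1 _ _).
by rewrite cardsU1 hx cV.
Qed.

Lemma card_bigcup_le (I T : finType) (S : I -> {set T}) :
  (#|\bigcup_i S i| <= \sum_i #|S i|)%N.
Proof.
elim/big_ind2: _ => //; first by rewrite cards0.
move=> m A n B hA hB; have h := leq_card_setU A B; move: h => [h _]; by apply: leq_trans h (leq_add hA hB).
Qed.
Import Order.TTheory.
Local Open Scope order_scope.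

Lemma upper (t : nat) (d : 'I_t -> Order.disp_t)
  (L : forall i : 'I_t, latticeType (d i)) (b : 'I_t -> nat) :
  (0 < \sum_(i < t) b i)%N ->
  (forall i, (0 < b i)%N) ->
  (forall i : 'I_t, breadth_le (@Order.join (d i) (L i)) (b i)) ->
  breadth_le (@prod_join t d L) (\sum_(i < t) b i).
Proof.
set B := (\sum_(i < t) b i).
move=> hB hb hbr m x hm.
have hm0 : (0 < m)%N by apply: leq_trans hB hm.
have hS : forall i, exists S : {set 'I_m}, (#|S| <= b i)%N /\
   forall u : L i, (forall k, k \in S -> x k i <= u) -> forall k, x k i <= u.
  move=> i.
  have hbm : (b i <= m)%N.
    by apply: leq_trans hm; rewrite /B (bigD1 i) //= leq_addr.
  have [f [finj fE]] := hbr i m (fun k => x k i) hbm.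
  exists (f @: setT); split.
    by apply: leq_trans (leq_imset_card _ _) _; rewrite cardsT card_ord.
  have [w hw] := famjoin_some Order.join (fun k => x k i) hm0.
  move=> u hu; apply/(famjoin_le hw).
  rewrite -fE in hw; apply/(famjoin_le hw) => k /=; apply: hu.
  by apply: imset_f; rewrite inE.
have [SS hSS] := fin_all_exists hS.
set U := \bigcup_i SS i.
have hU : (#|U| <= B)%N.
  apply: leq_trans (card_bigcup_le _) _; apply: leq_sum => i _; exact: (hSS i).1.
have [V [sUV cV]] : exists V : {set 'I_m}, U \subset V /\ #|V| = B.
  by apply: superset_card; rewrite hU card_ord.
pose f (k : 'I_B) : 'I_m := enum_val (cast_ord (esym cV) k).
exists f; split.
  by move=> k1 k2 /enum_val_inj /cast_ord_inj.
have hf : forall k, k \in U -> exists r, f r = k.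
  move=> k hk; have hkV : k \in V by apply: (subsetP sUV).
  exists (cast_ord cV (enum_rank_in hkV k)).
  by rewrite /f cast_ordK enum_rankK_in.
have [v hv] := famjoin_some (@prod_join t d L) (x \o f) hB.
have [w hw] := famjoin_some (@prod_join t d L) x hm0.
rewrite hv hw; congr Some.
apply: functional_extensionality_dep => i.
have hvi := famjoin_prod hv i; have hwi := famjoin_prod hw i.
apply: le_anti; apply/andP; split.
  apply/(famjoin_le hvi) => r; exact: (famjoin_ub hwi).
apply/(famjoin_le hwi); apply: (hSS i).2 => k hk.
have [r <-] := hf k (introT bigcupP (ex_intro2 _ _ i isT hk)).
exact: (famjoin_ub hvi r).
Qed.
Import Order.TTheory.
Local Open Scope order_scope.

Definition wit d (T : latticeType d) n (A : nat -> T) (c : T) (R : nat -> T) :=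
  (forall j, (j < n)%N -> c <= R j) /\
  (forall j j', (j < n)%N -> (j' < n)%N -> j' <> j -> A j' <= R j) /\
  (forall j, (j < n)%N -> ~ (A j <= R j)).

Lemma wit_exists d (T : latticeType d) n :
  is_breadth (@Order.join d T) n -> (exists x y : T, x <> y) ->
  exists A c R, @wit d T n A c R.
Proof.
move=> [hn [hbr hmin]] [x [y xy]].
case: n hn hbr hmin => // [] [|n] _ hbr hmin.
  exists (fun _ => x `|` y), (if y <= x then y else x), (fun _ => if y <= x then y else x).
  split; first by move=> *.
  split; first by move=> [|?] [|?].
  move=> j _; case: ifP => hyx; rewrite leUx lexx /= ?andbT => hle; apply: xy.
    by apply: le_anti; rewrite hle hyx.
  by move: hyx; rewrite hle.
have nb : ~ breadth_le (@Order.join d T) n.+1.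
  by move=> h; move: (hmin n.+1 isT h); rewrite ltnn.
have [m [z [hm hz]]] : exists m (z : 'I_m -> T), (n.+1 <= m)%N /\
   forall f : 'I_n.+1 -> 'I_m, injective f -> famjoin Order.join (z \o f) <> famjoin Order.join z.
  apply: NNPP => hc; apply: nb => m z hm; apply: NNPP => hf; apply: hc.
  exists m, z; split => // f finj fE; apply: hf; exists f; split => //.
case: (ltnP n.+1 m) => hm2; last first.
  have em : m = n.+1 by apply/eqP; rewrite eqn_leq hm hm2.
  subst m; by case: (hz id (fun a b h => h)).
have [g [ginj gE]] := hbr m z hm2.
pose a := z \o g.
have irr : forall j : 'I_n.+2, famjoin Order.join (a \o lift j) <> famjoin Order.join a.
  move=> j E; apply: (hz (g \o lift j)).
    by move=> u v /ginj /lift_inj.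
  by rewrite -gE -E.
pose R (j : nat) := if famjoin Order.join (a \o lift (inord j)) is Some r then r else x.
have hR : forall j : 'I_n.+2, famjoin Order.join (a \o lift j) = Some (R j).
  move=> j; rewrite /R inord_val.
  by have [r ->] := famjoin_some Order.join (a \o lift j) (ltn0Sn n).
have [w hw] := famjoin_some Order.join a (ltn0Sn n.+1).
have lift_of : forall j k : 'I_n.+2, k <> j -> exists k', lift j k' = k.
  move=> j k hkj; case: (unliftP j k) => [k' ->|ej]; first by exists k'.
  by case: hkj.
exists (fun j => a (inord j)), (a ord0 `&` a (inord 1)), R.
split.
  move=> j hj; have := hR (Ordinal hj); rewrite /= => hRj.
  case: (eqVneq (Ordinal hj) ord0) => hj0.
    have hne : inord 1 <> Ordinal hj by rewrite hj0 => /(congr1 val) /=; rewrite inordK.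
    have [k' hk'] := lift_of (Ordinal hj) (inord 1) hne.
    apply: le_trans (leIr _ _) _; rewrite -hk'; exact: (famjoin_ub hRj k').
  have hne : ord0 <> Ordinal hj by move=> e; move: hj0; rewrite -e eqxx.
  have [k' hk'] := lift_of (Ordinal hj) ord0 hne.
  apply: le_trans (leIl _ _) _; rewrite -hk'; exact: (famjoin_ub hRj k').
split.
  move=> j j' hj hj' hne; have := hR (Ordinal hj); rewrite /= => hRj.
  have hne' : inord j' <> Ordinal hj by move=> /(congr1 val) /=; rewrite inordK.
  have [k' hk'] := lift_of (Ordinal hj) (inord j') hne'.
  rewrite -hk'; exact: (famjoin_ub hRj k').
move=> j hj hle; have := hR (Ordinal hj); rewrite /= => hRj.
apply: (irr (Ordinal hj)); rewrite hRj hw; congr Some.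
apply: le_anti; apply/andP; split.
  apply/(famjoin_le hRj) => k; exact: (famjoin_ub hw).
apply/(famjoin_le hw) => k.
case: (eqVneq k (Ordinal hj)) => hk.
  by move: hle; rewrite hk /= (_ : inord j = Ordinal hj) //; apply: val_inj; rewrite /= inordK.
have hne : k <> Ordinal hj by move=> e; move: hk; rewrite e eqxx.
have [k' <-] := lift_of (Ordinal hj) k hne.
exact: (famjoin_ub hRj k').
Qed.
Import Order.TTheory.
Local Open Scope order_scope.

Lemma lower (t : nat) (d : 'I_t -> Order.disp_t)
  (L : forall i : 'I_t, latticeType (d i)) (b : 'I_t -> nat) :
  (forall i, exists A c R, @wit (d i) (L i) (b i) A c R) ->
  forall k, breadth_le (@prod_join t d L) k -> (\sum_(i < t) b i <= k)%N.
Proof.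
set B := (\sum_(i < t) b i).
move=> hW k hbr.
have [A hA] := fin_all_exists hW.
have [c hc] := fin_all_exists hA.
have [R hR] := fin_all_exists hc.
pose T := {i : 'I_t & 'I_(b i)}.
have cT : #|{: T}| = B.
  rewrite card_tagged sumnE big_map big_enum /=; apply: eq_bigr => i _; by rewrite card_ord.
pose e (p : T) : forall l, L l := fun l => if tag p == l then A l (val (tagged p)) else c l.
pose x (q : 'I_B) := e (enum_val (cast_ord (esym cT) q)).
case: (leqP B k) => // hkB.
have [f [finj fE]] := hbr B x (ltnW hkB).
have [q hq] : exists q, q \notin codom f.
  apply: NNPP => hn.
  have : (size (enum 'I_B) <= size (codom f))%N.
    apply: uniq_leq_size; first exact: enum_uniq.
    by move=> q _; apply: NNPP => hq; apply: hn; exists q; apply/negP.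
  by rewrite size_enum_ord size_codom card_ord leqNgt hkB.
have hB : (0 < B)%N by apply: leq_ltn_trans hkB.
have [w hw] := famjoin_some (@prod_join t d L) x hB.
have hv := hw; rewrite -fE in hv.
case Ep: (enum_val (cast_ord (esym cT) q)) => [i j].
have hwi := famjoin_prod hw i; have hvi := famjoin_prod hv i.
have [W1 [W2 W3]] := hR i.
exfalso; apply: (W3 (val j) (ltn_ord j)).
apply: le_trans (_ : w i <= _).
  have := famjoin_ub hwi q; by rewrite /x /e Ep /= eqxx.
apply/(famjoin_le hvi) => r /=.
have hrq : f r <> q by move=> e0; move: hq; rewrite -e0 codom_f.
rewrite /x /e.
case Ep': (enum_val (cast_ord (esym cT) (f r))) => [i' j'] /=.
case: (eqVneq i' i) => hii; last first.
  by apply: W1.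
subst i'; apply: W2 => //.
move=> ej; apply: hrq.
have ejj : j' = j by apply: val_inj.
subst j'; rewrite -Ep in Ep'.
by move/enum_val_inj/cast_ord_inj: Ep'.
Qed.

Theorem lemma2p2 (t : nat) (d : 'I_t -> Order.disp_t)
  (L : forall i : 'I_t, latticeType (d i)) (b : 'I_t -> nat) :
  (2 <= t)%N ->
  (forall i : 'I_t, exists x y : L i, x <> y) ->
  (forall i : 'I_t, is_breadth (@Order.join (d i) (L i)) (b i)) ->
  is_breadth (@prod_join t d L) (\sum_(i < t) b i).
Proof.
move=> ht hne hbr.
have hb : forall i, (0 < b i)%N by move=> i; exact: (hbr i).1.
have ht0 : (0 < t)%N by apply: leq_trans ht.
have hB : (0 < \sum_(i < t) b i)%N.
  by rewrite (bigD1 (Ordinal ht0)) //=; apply: leq_trans (hb _) (leq_addr _ _).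
split => //; split.
  by apply: upper => // i; exact: (hbr i).2.1.
move=> k hk hbk; apply: lower hbk => i; exact: wit_exists (hbr i) (hne i).
Qed.
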